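(* Let $n\ge 1$ and let $\sigma$ be any permutation of $\{1,\dots,n\}$. Let $P_\sigma$ be the unitary on $n$ qubits that permutes the qubits according to $\sigma$, i.e. $P_\sigma|b_1 b_2\cdots b_n\rangle = |b_{\sigma^{-1}(1)} b_{\sigma^{-1}(2)}\cdots b_{\sigma^{-1}(n)}\rangle$ for all $b_i\in\{0,1\}$. Then: (i) $P_\sigma$ can be embedded, using $n$ ancillae, in a circuit consisting of 4 layers each of which contains only controlled-not gates (acting on disjoint pairs of qubits); (ii) $P_\sigma$ is equal (with no ancillae) to a circuit consisting of 6 layers each of which contains only controlled-not gates (acting on disjoint pairs of qubits).
   Context: Qubits have computational basis $|0\rangle,|1\rangle$; an operator on $n$ qubits is a $2^n\times 2^n$ unitary matrix indexed by bit strings. The controlled-not gate is the two-qubit unitary $\mathrm{diag}$-block matrix $\begin{pmatrix}1&0&0&0\\0&1&0&0\\0&0&0&1\\0&0&1&0\end{pmatrix}$ (first qubit = control, second = target), i.e. $|a,b\rangle\mapsto|a,a\oplus b\rangle$. A layer is a tensor product of gates acting on pairwise disjoint sets of qubits (qubits not acted on are left unchanged); a circuit of $k$ layers is the product of $k$ layers. An operator $F$ on $n$ qubits is embedded in an operator $M$ on $n+m$ qubits using $m$ ancillae if $M$ maps the subspace where all $m$ ancilla qubits are $|0\rangle$ into itself and, restricted to that subspace, equals $F\otimes \mathbf{1}$ (i.e. $M(|\psi\rangle\otimes|0\cdots0\rangle)=(F|\psi\rangle)\otimes|0\cdots 0\rangle$ for all $|\psi\rangle$). *)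

(* Defs.v *)
From mathcomp Require Import all_boot all_order all_algebra all_fingroup algC.
Set Implicit Arguments. Unset Strict Implicit. Unset Printing Implicit Defensive.
Import GRing.Theory.
Local Open Scope ring_scope.

Definition bits (n : nat) := {ffun 'I_n -> bool}.

(* An operator on n qubits, given by its matrix entries <x| A |y>. *)
Definition op (n : nat) := bits n -> bits n -> algC.

Definition op_mul n (A B : op n) : op n := fun x y => \sum_(z : bits n) A x z * B z y.
Definition op_id n : op n := fun x y => (x == y)%:R.

Definition op_apply n (A : op n) (psi : bits n -> algC) : bits n -> algC :=
  fun x => \sum_(z : bits n) A x z * psi z.

Definition cnot_op n (c t : 'I_n) : op n :=
  fun x y => (x == [ffun i => if i == t then addb (y t) (y c) else y i])%:R.

Definition cnot_layer n (L : seq ('I_n * 'I_n)) : bool :=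
  all (fun p => p.1 != p.2) L && uniq (flatten [seq [:: p.1; p.2] | p <- L]).

(* The operator of a layer: tensor product of its gates (and identity on the
   unused qubits), i.e. the product of the commuting embedded gates. *)
Definition layer_op n (L : seq ('I_n * 'I_n)) : op n :=
  foldr (fun p A => op_mul (cnot_op p.1 p.2) A) (@op_id n) L.

Definition circuit_op n (Ls : seq (seq ('I_n * 'I_n))) : op n :=
  foldr (fun L A => op_mul (layer_op L) A) (@op_id n) Ls.

Definition cnot_circuit n (k : nat) (Ls : seq (seq ('I_n * 'I_n))) : bool :=
  (size Ls == k) && all (@cnot_layer n) Ls.

Definition perm_qubits n (s : {perm 'I_n}) : op n :=
  fun x y => (x == [ffun i => y ((s^-1)%g i)])%:R.

(* psi (x) |0...0> on n + m qubits; the last m qubits are the ancillae. *)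
Definition embed_state n m (psi : bits n -> algC) : bits (n + m) -> algC :=
  fun z => if [forall j : 'I_m, ~~ z (rshift n j)]
           then psi [ffun i => z (lshift m i)] else 0.

Definition embeds n m (F : op n) (M : op (n + m)) : Prop :=
  forall psi : bits n -> algC,
    forall z, op_apply M (@embed_state n m psi) z = @embed_state n m (op_apply F psi) z.

(* Main.v *)
Require Import Defs.
From mathcomp Require Import all_boot zify.

Lemma md j k : 0 < k -> j < 2 * k -> j %% k = if j < k then j else j - k.
Proof.
move=> k0 h; case: ifP => hj; first by rewrite modn_small.
have -> : j = (j - k) + k by lia.
by rewrite modnDr modn_small; lia.
Qed.
Lemma a1 k i : i < k -> (k - (k - i) %% k) %% k = i.
Proof. move=> h. rewrite (md (k - i)); try lia. case: ifP => h1; rewrite md; try lia; case: ifP; lia. Qed.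
Lemma a2 k i : i < k -> (k.+1 - (k.+1 - i) %% k) %% k = i.
Proof. move=> h. case: (ltnP 1 k) => hk; last first.
 have ek : k = 1 by lia. subst k. rewrite !modn1. lia.
 rewrite (md (k.+1 - i)); try lia. case: ifP => h1; rewrite md; try lia; case: ifP; lia. Qed.
Lemma a3 k i : i < k -> (k.+1 - (k - i) %% k) %% k = i.+1 %% k.
Proof. move=> h. case: (ltnP 1 k) => hk; last first.
 have ek : k = 1 by lia. subst k. by rewrite !modn1.
 rewrite (md (k - i)); try lia. rewrite (md i.+1); try lia. case: ifP => h1; rewrite md; try lia; case: ifP; case: ifP; lia. Qed.

Section Orb.
Variables (T : finType) (f : T -> T).
Hypothesis fi : injective f.
Let sym : connect_sym (frel f) := fconnect_sym fi.
Definition rt x := froot f x.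
Definition ko x := order f (rt x).
Definition ix x := findex f (rt x) x.
Definition R (d : nat -> nat -> nat) x := iter (d (ko x) (ix x) %% ko x) f (rt x).

Lemma con_rt x : fconnect f (rt x) x.
Proof. by rewrite sym; apply: connect_root. Qed.
Lemma ix_lt x : ix x < ko x. Proof. exact: findex_max (con_rt x). Qed.
Lemma ix_it x : iter (ix x) f (rt x) = x. Proof. exact: iter_findex (con_rt x). Qed.
Lemma rt_it x j : rt (iter j f (rt x)) = rt x.
Proof.
rewrite /rt -{2}(root_root sym x); apply/esym/(rootP sym).
exact: fconnect_iter.
Qed.
Lemma ix_it2 x j : j < ko x -> ix (iter j f (rt x)) = j.
Proof. by move=> h; rewrite /ix rt_it findex_iter. Qed.
Lemma iter_mod x j : iter (j %% ko x) f (rt x) = iter j f (rt x).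
Proof.
rewrite {2}(divn_eq j (ko x)) addnC iterD; congr iter.
elim: (j %/ ko x) => [|q IH] //=; by rewrite mulSn iterD -IH (iter_order fi).
Qed.
Lemma R_comp d1 d2 x :
  R d2 (R d1 x) = iter (d2 (ko x) ((d1 (ko x) (ix x)) %% ko x) %% ko x) f (rt x).
Proof.
rewrite /R /ko rt_it -/(ko x) ix_it2 // ltn_mod; exact: order_gt0.
Qed.

Definition r1 := R (fun k i => k - i).
Definition r2 := R (fun k i => k.+1 - i).
Lemma r1K : involutive r1.
Proof. by move=> x; rewrite /r1 R_comp a1 ?ix_lt // ix_it. Qed.
Lemma r2K : involutive r2.
Proof. by move=> x; rewrite /r2 R_comp a2 ?ix_lt // ix_it. Qed.
Lemma r21 x : r2 (r1 x) = f x.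
Proof. by rewrite /r1 /r2 R_comp a3 ?ix_lt // iter_mod iterS ix_it. Qed.
End Orb.

From mathcomp Require Import all_boot all_order all_algebra all_fingroup algC.
Set Implicit Arguments. Unset Strict Implicit. Unset Printing Implicit Defensive.
Import GRing.Theory.
Local Open Scope ring_scope.

Definition is_fun n (A : op n) (f : bits n -> bits n) := forall x y, A x y = (x == f y)%:R.

Lemma sum_ind n (f : bits n -> bits n) (phi : bits n -> algC) z y1 :
  injective f -> f y1 = z -> \sum_y (z == f y)%:R * phi y = phi y1.
Proof.
move=> fi fy; rewrite (bigD1 y1) //= fy eqxx mul1r big1 ?addr0 // => y /negbTE ny.
have -> : (z == f y) = false by apply/eqP=> e; move: ny; rewrite -fy in e; rewrite (fi _ _ e) eqxx.
by rewrite mul0r.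
Qed.

Lemma is_fun_mul n (A B : op n) f g : is_fun A f -> is_fun B g -> is_fun (op_mul A B) (f \o g).
Proof.
move=> hA hB x y; rewrite /op_mul (bigD1 (g y)) //= hA hB eqxx mulr1 big1 ?addr0 //.
by move=> z /negbTE nz; rewrite hA hB nz mulr0.
Qed.

Lemma is_fun_id n : is_fun (@op_id n) id.
Proof. by []. Qed.

Definition cnotf n (c t : 'I_n) (y : bits n) : bits n :=
  [ffun i => if i == t then addb (y t) (y c) else y i].

Definition layer_fun n (L : seq ('I_n * 'I_n)) : bits n -> bits n :=
  foldr (fun p f => cnotf p.1 p.2 \o f) id L.
Definition circuit_fun n (Ls : seq (seq ('I_n * 'I_n))) : bits n -> bits n :=
  foldr (fun L f => layer_fun L \o f) id Ls.

Lemma layer_is_fun n (L : seq ('I_n * 'I_n)) : is_fun (layer_op L) (layer_fun L).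
Proof. elim: L => [|p L IH] //=; exact: is_fun_mul. Qed.

Lemma circuit_is_fun n (Ls : seq (seq ('I_n * 'I_n))) : is_fun (circuit_op Ls) (circuit_fun Ls).
Proof. elim: Ls => [|L Ls IH] //=; apply: is_fun_mul => //; exact: layer_is_fun. Qed.

Lemma cnotfK n (c t : 'I_n) : c != t -> involutive (cnotf c t).
Proof.
move=> ct y; apply/ffunP=> i; rewrite !ffunE.
case: eqP => [->|_] //; rewrite eqxx (negbTE ct) -addbA addbb addbF //.
Qed.

Lemma layer_inj n (L : seq ('I_n * 'I_n)) : all (fun p => p.1 != p.2) L -> injective (layer_fun L).
Proof.
elim: L => [|p L IH] /=; first by move=> _ x y.
case/andP=> h1 h2; apply: inj_comp; [exact: inv_inj (cnotfK h1) | exact: IH].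
Qed.

Lemma circuit_inj n (Ls : seq (seq ('I_n * 'I_n))) : all (@cnot_layer n) Ls -> injective (circuit_fun Ls).
Proof.
elim: Ls => [|L Ls IH] /=; first by move=> _ x y.
case/andP=> /andP[h1 _] h2; apply: inj_comp; [exact: layer_inj | exact: IH].
Qed.

Lemma layer_spec n (L : seq ('I_n * 'I_n)) y : cnot_layer L ->
  (forall p, p \in L -> layer_fun L y p.2 = addb (y p.2) (y p.1)) /\
  (forall i, i \notin [seq p.2 | p <- L] -> layer_fun L y i = y i).
Proof.
elim: L => [|p L IH] /=; first by split.
rewrite /cnot_layer /= => /andP[/andP[h1 h2] /andP[n1 /andP[n2 u]]].
have [IH1 IH2] := IH (introT andP (conj h2 u)).
rewrite inE negb_or in n1.
case/andP: n1 => _ n1.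
have tgt : forall i, i \notin flatten [seq [:: p0.1; p0.2] | p0 <- L] -> i \notin [seq p0.2 | p0 <- L].
  move=> i hi; apply/mapP=> -[q qL ei]; case/negP: hi; apply/flatten_mapP; rewrite ei.
  by exists q => //; rewrite !inE eqxx orbT.
split.
  move=> q; rewrite inE => /orP[/eqP->|qL]; rewrite /= ffunE.
    by rewrite eqxx (IH2 _ (tgt _ n1)) (IH2 _ (tgt _ n2)).
  have -> : (q.2 == p.2) = false.
    apply/eqP=> e; case/negP: n2; rewrite -e; apply/flatten_mapP.
    by exists q => //; rewrite !inE eqxx orbT.
  by rewrite IH1.
move=> i; rewrite inE negb_or => /andP[ni ni2] /=; rewrite ffunE (negbTE ni) IH2 //.
Qed.


Lemma flat2 (T U : eqType) (f g : T -> U) l :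
  perm_eq (flatten [seq [:: f a; g a] | a <- l]) (map f l ++ map g l).
Proof.
elim: l => [|a l IH] //=; rewrite perm_cons perm_sym (perm_catCA (map f l) [:: g a]) /= perm_cons perm_sym //.
Qed.

Lemma layer_map_ok (T : eqType) n (f g : T -> 'I_n) l : uniq l ->
  {in l &, injective f} -> {in l &, injective g} -> {in l &, forall a b, f a != g b} ->
  cnot_layer [seq (f a, g a) | a <- l].
Proof.
move=> ul fi gi fg; apply/andP; split.
  by rewrite all_map; apply/allP=> a al /=; apply: fg.
have -> : [seq [:: p.1; p.2] | p <- [seq (f a, g a) | a <- l]] = [seq [:: f a; g a] | a <- l]
  by rewrite -map_comp.
rewrite (perm_uniq (flat2 f g l)) cat_uniq !map_inj_in_uniq // ul /= andbT.
apply/hasPn => _ /mapP[b bl ->]; apply/mapP => -[a al e].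
by move: (fg a b al bl); rewrite e eqxx.
Qed.


Lemma notin_tgt (T : eqType) n (f g : T -> 'I_n) l i :
  (forall a, a \in l -> i != g a) -> i \notin [seq p.2 | p <- [seq (f a, g a) | a <- l]].
Proof.
move=> h; apply/mapP => -[_ /mapP[a al ->] /= e]; by move: (h a al); rewrite e eqxx.
Qed.

Lemma in_layer (T : eqType) n (f g : T -> 'I_n) l a : a \in l -> (f a, g a) \in [seq (f a, g a) | a <- l].
Proof. by move=> al; apply: (map_f (fun a => (f a, g a))). Qed.

Section Swap.
Variables (n : nat) (r : 'I_n -> 'I_n).
Hypothesis rK : involutive r.
Definition sl := [seq a <- enum 'I_n | (nat_of_ord a < nat_of_ord (r a))%N].
Definition swA := [seq (a, r a) | a <- sl].
Definition swB := [seq (r a, a) | a <- sl].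

Lemma in_sl a : (a \in sl) = (a < r a)%N.
Proof. by rewrite mem_filter mem_enum andbT. Qed.

Lemma swA_ok : cnot_layer swA.
Proof.
apply: layer_map_ok; first by rewrite filter_uniq // enum_uniq.
- by move=> a b _ _.
- by move=> a b _ _; apply: inv_inj.
move=> a b; rewrite !in_sl => ha hb; apply/eqP => e.
by move: ha hb; rewrite e rK => ha hb; move: (ltn_trans ha hb); rewrite ltnn.
Qed.

Lemma swB_ok : cnot_layer swB.
Proof.
apply: layer_map_ok; first by rewrite filter_uniq // enum_uniq.
- by move=> a b _ _; apply: inv_inj.
- by move=> a b _ _.
move=> a b; rewrite !in_sl => ha hb; apply/eqP => e.
by move: ha hb; rewrite -e rK => ha hb; move: (ltn_trans ha hb); rewrite ltnn.
Qed.

Lemma swap_fun y : layer_fun swA (layer_fun swB (layer_fun swA y)) = [ffun i => y (r i)].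
Proof.
have [A1 A2] := layer_spec y swA_ok.
set z := layer_fun swA y.
have [B1 B2] := layer_spec z swB_ok.
set w := layer_fun swB z.
have [C1 C2] := layer_spec w swA_ok.
have nA : forall i : 'I_n, (i <= r i)%N -> i \notin [seq p.2 | p <- swA].
  move=> i hi; apply: notin_tgt => a; rewrite in_sl => ha; apply/eqP => e.
  by move: hi; rewrite e ?rK => hi; move: (leq_trans ha hi); rewrite ltnn.
have nB : forall i : 'I_n, (r i <= i)%N -> i \notin [seq p.2 | p <- swB].
  move=> i hi; apply: notin_tgt => a; rewrite in_sl => ha; apply/eqP => e.
  by move: hi; rewrite e ?rK => hi; move: (leq_trans ha hi); rewrite ltnn.
have case1 : forall i : 'I_n, (i < r i)%N -> w i = y (r i).
  move=> i hi.
  have := B1 (r i, i) (in_layer r id (introT idP (etrans (in_sl i) hi))).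
  rewrite /= => ->.
  rewrite A2; last by apply: nA; apply: ltnW.
  have := A1 (i, r i) (in_layer id r (introT idP (etrans (in_sl i) hi))).
  rewrite /= => ->.
  by case: (y i); case: (y (r i)).
apply/ffunP => i; rewrite ffunE.
case: (ltngtP i (r i)) => hi.
- rewrite C2; last by apply: nA; apply: ltnW.
  exact: case1.
- set a := r i.
  have ha : (a < r a)%N by rewrite /a rK.
  have -> : i = r a by rewrite /a rK.
  have := C1 (a, r a) (in_layer id r (introT idP (etrans (in_sl a) ha))).
  rewrite /= => ->.
  rewrite (case1 a ha) /w B2; last by apply: nB; rewrite rK; apply: ltnW.
  rewrite /z.
  have := A1 (a, r a) (in_layer id r (introT idP (etrans (in_sl a) ha))).
  rewrite /= => ->.
  by case: (y a); case: (y (r a)).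
- have e : r i = i by apply: val_inj.
  rewrite e C2; last by apply: nA; rewrite e.
  rewrite B2; last by apply: nB; rewrite e.
  by rewrite A2 // nA // e.
Qed.
End Swap.


Lemma lay_at n (f g : 'I_n -> 'I_n) (y : bits n) a :
  cnot_layer [seq (f a, g a) | a <- enum 'I_n] ->
  layer_fun [seq (f a, g a) | a <- enum 'I_n] y (g a) = addb (y (g a)) (y (f a)).
Proof.
move=> ok; have [h _] := layer_spec y ok; exact: (h (f a, g a) (in_layer f g (mem_enum _ a))).
Qed.

Lemma lay_at2 n m (f g : 'I_m -> 'I_n) (y : bits n) a :
  cnot_layer [seq (f a, g a) | a <- enum 'I_m] ->
  layer_fun [seq (f a, g a) | a <- enum 'I_m] y (g a) = addb (y (g a)) (y (f a)).
Proof.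
move=> ok; have [h _] := layer_spec y ok; exact: (h (f a, g a) (in_layer f g (mem_enum _ a))).
Qed.

Lemma lay_off2 n m (f g : 'I_m -> 'I_n) (y : bits n) i :
  cnot_layer [seq (f a, g a) | a <- enum 'I_m] -> (forall a, i != g a) ->
  layer_fun [seq (f a, g a) | a <- enum 'I_m] y i = y i.
Proof.
move=> ok h; have [_ h2] := layer_spec y ok; apply: h2; apply: notin_tgt => a _; exact: h.
Qed.

Section Part2.
Variables (n : nat) (s : {perm 'I_n}).
Let f := fun x : 'I_n => s x.
Let fi : injective f := @perm_inj _ s.
Let q1 := @r1 _ f. Let q2 := @r2 _ f.
Definition Ls2 := [:: swA q2; swB q2; swA q2; swA q1; swB q1; swA q1].

Lemma part2 : cnot_circuit 6 Ls2 /\ forall x y, circuit_op Ls2 x y = perm_qubits s x y.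
Proof.
have k1 : involutive q1 := @r1K _ f fi.
have k2 : involutive q2 := @r2K _ f fi.
split.
  by rewrite /cnot_circuit /= !swA_ok ?swB_ok.
move=> x y; rewrite circuit_is_fun /perm_qubits; congr (_ %:R); congr (x == _).
rewrite /circuit_fun /= !swap_fun //.
apply/ffunP => i; rewrite !ffunE.
congr (y _).
apply: (@perm_inj _ s); rewrite permKV.
have := @r21 _ f fi (q1 (q2 i)); rewrite -/q1 -/q2 /f /= => <-.
by rewrite k1 k2.
Qed.
End Part2.


Section Part1.
Variables (n : nat) (s : {perm 'I_n}).
Definition L1 := [seq (lshift n i, rshift n (s i)) | i <- enum 'I_n].
Definition L2 := [seq (rshift n j, lshift n j) | j <- enum 'I_n].
Definition L3 := [seq (rshift n (s j), lshift n j) | j <- enum 'I_n].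
Definition L4 := [seq (lshift n j, rshift n j) | j <- enum 'I_n].
Definition Ls1 := [:: L4; L3; L2; L1].

Lemma ok1 : cnot_layer L1.
Proof.
apply: layer_map_ok; rewrite ?enum_uniq //.
- by move=> a b _ _; apply: lshift_inj.
- by move=> a b _ _ /rshift_inj /perm_inj.
- by move=> a b _ _; rewrite eq_lrshift.
Qed.
Lemma ok2 : cnot_layer L2.
Proof.
apply: layer_map_ok; rewrite ?enum_uniq //.
- by move=> a b _ _; apply: rshift_inj.
- by move=> a b _ _; apply: lshift_inj.
- by move=> a b _ _; rewrite eq_rlshift.
Qed.
Lemma ok3 : cnot_layer L3.
Proof.
apply: layer_map_ok; rewrite ?enum_uniq //.
- by move=> a b _ _ /rshift_inj /perm_inj.
- by move=> a b _ _; apply: lshift_inj.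
- by move=> a b _ _; rewrite eq_rlshift.
Qed.
Lemma ok4 : cnot_layer L4.
Proof.
apply: layer_map_ok; rewrite ?enum_uniq //.
- by move=> a b _ _; apply: lshift_inj.
- by move=> a b _ _; apply: rshift_inj.
- by move=> a b _ _; rewrite eq_lrshift.
Qed.

Lemma circ1 : cnot_circuit 4 Ls1.
Proof. by rewrite /cnot_circuit /= ok1 ok2 ok3 ok4. Qed.

Lemma F_spec (y : bits (n + n)) : (forall j, y (rshift n j) = false) ->
  forall j, circuit_fun Ls1 y (lshift n j) = y (lshift n ((s^-1)%g j)) /\
            circuit_fun Ls1 y (rshift n j) = false.
Proof.
move=> y0.
set z := layer_fun L1 y.
have z1 : forall j, z (lshift n j) = y (lshift n j).
  by move=> j; apply: lay_off2 ok1 _ => a; rewrite eq_lrshift.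
have z2 : forall j, z (rshift n j) = y (lshift n ((s^-1)%g j)).
  move=> j; rewrite -{1}(permKV s j).
  by rewrite /z (@lay_at2 _ _ (fun i => lshift n i) (fun i => rshift n (s i)) y _ ok1) y0.
set w := layer_fun L2 z.
have w1 : forall j, w (lshift n j) = addb (z (lshift n j)) (z (rshift n j)).
  by move=> j; rewrite /w (@lay_at2 _ _ (fun i => rshift n i) (fun i => lshift n i) z _ ok2).
have w2 : forall j, w (rshift n j) = z (rshift n j).
  by move=> j; apply: lay_off2 ok2 _ => a; rewrite eq_rlshift.
set u := layer_fun L3 w.
have u1 : forall j, u (lshift n j) = addb (w (lshift n j)) (w (rshift n (s j))).
  by move=> j; rewrite /u (@lay_at2 _ _ (fun i => rshift n (s i)) (fun i => lshift n i) w _ ok3).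
have u2 : forall j, u (rshift n j) = w (rshift n j).
  by move=> j; apply: lay_off2 ok3 _ => a; rewrite eq_rlshift.
have ev : circuit_fun Ls1 y = layer_fun L4 u by [].
move=> j; rewrite ev; split.
  rewrite (@lay_off2 _ _ (fun i => lshift n i) (fun i => rshift n i) u _ ok4); last first.
    by move=> a; rewrite eq_lrshift.
  rewrite u1 w1 w2 z1 !z2 permK.
  by case: (y (lshift n j)); case: (y (lshift n ((s^-1)%g j))).
rewrite (@lay_at2 _ _ (fun i => lshift n i) (fun i => rshift n i) u _ ok4).
rewrite u1 w1 u2 !w2 z1 !z2 permK.
by case: (y (lshift n j)); case: (y (lshift n ((s^-1)%g j))).
Qed.
End Part1.


Lemma part1 n (s : {perm 'I_n}) : embeds (perm_qubits s) (circuit_op (Ls1 s)).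
Proof.
have sl : forall i : 'I_n, split (lshift n i) = inl i := fun i => unsplitK (inl _ i).
have sr : forall i : 'I_n, split (rshift n i) = inr i := fun i => unsplitK (inr _ i).
set F := circuit_fun (Ls1 s).
have Fi : injective F by apply: circuit_inj; rewrite /= ok1 ok2 ok3 ok4.
have Pi : injective (fun w : bits n => [ffun i => w ((s^-1)%g i)]).
  move=> w1 w2 e; apply/ffunP => i; move/ffunP: e => /(_ (s i)); by rewrite !ffunE permK.
move=> psi z; rewrite /op_apply.
rewrite (eq_bigr (fun y => (z == F y)%:R * embed_state psi y)); last first.
  by move=> y _; rewrite circuit_is_fun.
rewrite {2}/embed_state.
case: ifP => hz.
  set y1 : bits (n + n) := [ffun k => if split k is inl i then z (lshift n (s i)) else false].
  have y10 : forall j, y1 (rshift n j) = false by move=> j; rewrite ffunE sr.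
  have y1l : forall j, y1 (lshift n j) = z (lshift n (s j)) by move=> j; rewrite ffunE sl.
  have Fy1 : F y1 = z.
    apply/ffunP => k; case: (split_ordP k) => [i ->|j ->].
      by have [-> _] := F_spec s y10 i; rewrite y1l permKV.
    have [_ ->] := F_spec s y10 j.
    by move/forallP: hz => /(_ j) /negbTE.
  rewrite (@sum_ind _ F _ z y1 Fi Fy1) /embed_state.
  have -> : [forall j, ~~ y1 (rshift n j)] by apply/forallP => j; rewrite y10.
  rewrite /op_apply /perm_qubits (@sum_ind _ _ _ _ [ffun i => y1 (lshift n i)] Pi) //.
  by apply/ffunP => i; rewrite !ffunE sl permKV.
apply: big1 => y _; rewrite /embed_state.
case: ifP => hy; last by rewrite mulr0.
have y0 : forall j, y (rshift n j) = false by move=> j; move/forallP: hy => /(_ j) /negbTE.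
have -> : (z == F y) = false.
  apply/eqP => e.
  have : [forall j, ~~ z (rshift n j)].
    by rewrite e; apply/forallP => j; have [_ ->] := F_spec s y0 j.
  by rewrite hz.
by rewrite mul0r.
Qed.

Unset Implicit Arguments.
Theorem proposition1 (n : nat) (hn : (1 <= n)%N) (s : {perm 'I_n}) :
  (exists Ls : seq (seq ('I_(n + n) * 'I_(n + n))),
      cnot_circuit 4 Ls /\ embeds (perm_qubits s) (circuit_op Ls))
  /\
  (exists Ls : seq (seq ('I_n * 'I_n)),
      cnot_circuit 6 Ls /\ forall x y, circuit_op Ls x y = perm_qubits s x y).
Proof.
split; first by exists (Ls1 s); split; [exact: circ1 | exact: part1].
by exists (Ls2 s); exact: part2.
Qed.
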